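(* For every $k\in\mathbb Z$ there is an isomorphism of (strict) monoidal categories $\omega:\mathcal{H}eis_k\to(\mathcal{H}eis_{-k})^{\mathrm{op}}$ which interchanges the objects $\uparrow$ and $\downarrow$ and is defined on generating morphisms by $x\mapsto x'$, $s\mapsto -s'$, $c\mapsto d$ and $d\mapsto c$, where $x',s'$ (and the $c,d$ on the right) denote the morphisms of $\mathcal{H}eis_{-k}$ defined in the context.
   Context: Fix a commutative ring $\Bbbk$. For an integer $m$, the Heisenberg category $\mathcal{H}eis_m$ is the strict $\Bbbk$-linear monoidal category generated by objects $\uparrow,\downarrow$ and morphisms $x:\uparrow\to\uparrow$, $s:\uparrow\otimes\uparrow\to\uparrow\otimes\uparrow$, $c:\mathbf 1\to\downarrow\otimes\uparrow$, $d:\uparrow\otimes\downarrow\to\mathbf 1$ ($\mathbf 1$ the unit object, $1_X$ identities, $\circ$ composition, $x^n$ the $n$-fold composite), subject to the following relations, where $t:=(1_\downarrow\otimes 1_\uparrow\otimes d)\circ(1_\downarrow\otimes s\otimes 1_\downarrow)\circ(c\otimes 1_\uparrow\otimes 1_\downarrow):\uparrow\otimes\downarrow\to\downarrow\otimes\uparrow$: (H) $s\circ s=1_{\uparrow\otimes\uparrow}$; $(s\otimes 1_\uparrow)\circ(1_\uparrow\otimes s)\circ(s\otimes 1_\uparrow)=(1_\uparrow\otimes s)\circ(s\otimes 1_\uparrow)\circ(1_\uparrow\otimes s)$; $(x\otimes 1_\uparrow)\circ s-s\circ(1_\uparrow\otimes x)=1_{\uparrow\otimes\uparrow}$. (A)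 $(d\otimes 1_\uparrow)\circ(1_\uparrow\otimes c)=1_\uparrow$ and $(1_\downarrow\otimes d)\circ(c\otimes 1_\downarrow)=1_\downarrow$. (I) If $m\ge0$, the morphism $\uparrow\otimes\downarrow\to(\downarrow\otimes\uparrow)\oplus\mathbf 1^{\oplus m}$ with components $t$ and $d\circ(x^r\otimes 1_\downarrow)$, $r=0,\dots,m-1$, is an isomorphism in the additive envelope; if $m<0$, the morphism $(\uparrow\otimes\downarrow)\oplus\mathbf 1^{\oplus(-m)}\to\downarrow\otimes\uparrow$ with components $t$ and $(1_\downarrow\otimes x^r)\circ c$, $r=0,\dots,-m-1$, is an isomorphism in the additive envelope (formally, the entries of a two-sided inverse matrix are adjoined as generators). In $\mathcal{H}eis_m$ define $x':=(1_\downarrow\otimes d)\circ(1_\downarrow\otimes x\otimes 1_\downarrow)\circ(c\otimes 1_\downarrow):\downarrow\to\downarrow$ and $s':=(1_\downarrow\otimes 1_\downarrow\otimes d)\circ(1_\downarrow\otimes t\otimes 1_\downarrow)\circ(c\otimes 1_\downarrow\otimes 1_\downarrow):\downarrow\otimes\downarrow\to\downarrow\otimes\downarrow$ (the right mates of $x$ and $s$). $\mathcal C^{\mathrm{op}}$ denotes the opposite category with the same tensor product. *)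

(* Defs.v *)
(* A from-scratch presentation of the Heisenberg category
   Heis_k as a strict K-linear monoidal category given by generators and
   relations: morphisms of Heis_k from a to b are the raw terms t with
   [ty k t = Some (a, b)], modulo the congruence [heq k]. *)
From HB Require Import structures.
From mathcomp Require Import all_boot all_order all_algebra.
Set Implicit Arguments. Unset Strict Implicit. Unset Printing Implicit Defensive.
Import Order.TTheory GRing.Theory Num.Theory.

(* Objects: words in {up, down}; true = up, false = down; tensor = concatenation. *)
Definition obj := seq bool.
Definition up : obj := [:: true].
Definition dn : obj := [:: false].
Definition swapo (a : obj) : obj := map negb a.

Section Terms.
Variable K : comPzRingType.

Inductive term : Type :=
| tId of obj
| tX
| tS
| tC
| tD
| tInvT                      (* adjoined inverse entry  down up -> up down *)
| tInvC of nat
| tInvE of nat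
| tComp of term & term       (* tComp g f = g \circ f *)
| tTens of term & term
| tZero of obj & obj
| tAdd of term & term
| tScal of K & term.

Fixpoint ty (k : int) (t : term) : option (obj * obj) :=
  match t with
  | tId a => Some (a, a)
  | tX => Some (up, up)
  | tS => Some (up ++ up, up ++ up)
  | tC => Some ([::], dn ++ up)
  | tD => Some (up ++ dn, [::])
  | tInvT => Some (dn ++ up, up ++ dn)
  | tInvC r => if (0 <= k)%R && (r < absz k)%N then Some ([::], up ++ dn) else None
  | tInvE r => if (k < 0)%R && (r < absz k)%N then Some (dn ++ up, [::]) else None
  | tComp g f =>
      match ty k g, ty k f with
      | Some (b', c), Some (a, b) => if b == b' then Some (a, c) else None
      | _, _ => None
      end
  | tTens f g =>
      match ty k f, ty k g with
      | Some (a, b), Some (c, d) => Some (a ++ c, b ++ d)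
      | _, _ => None
      end
  | tZero a b => Some (a, b)
  | tAdd f g =>
      match ty k f, ty k g with
      | Some p, Some q => if p == q then Some p else None
      | _, _ => None
      end
  | tScal _ f => ty k f
  end.

Definition wt (k : int) (t : term) : bool := ty k t != None.

Definition tOpp (f : term) : term := tScal (-1)%R f.
Definition tSub (f g : term) : term := tAdd f (tOpp g).
Definition tsum (a b : obj) (fs : seq term) : term := foldr tAdd (tZero a b) fs.

Definition xpow (n : nat) : term := iter n (tComp tX) (tId up).

Definition tT : term :=
  tComp (tTens (tId (dn ++ up)) tD)
    (tComp (tTens (tId dn) (tTens tS (tId dn))) (tTens tC (tId (up ++ dn)))).

(* x' : down -> down and s' : down down -> down down (right mates) *)
Definition tX' : term :=
  tComp (tTens (tId dn) tD)
    (tComp (tTens (tId dn) (tTens tX (tId dn))) (tTens tC (tId dn))).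
Definition tS' : term :=
  tComp (tTens (tId (dn ++ dn)) tD)
    (tComp (tTens (tId dn) (tTens tT (tId dn))) (tTens tC (tId (dn ++ dn)))).

Definition dr (r : nat) : term := tComp tD (tTens (xpow r) (tId dn)).
Definition cr (r : nat) : term := tComp (tTens (tId dn) (xpow r)) tC.

Definition delta (r s : nat) : term :=
  if r == s then tId [::] else tZero [::] [::].

Inductive heq (k : int) : term -> term -> Prop :=
| heq_refl t : heq k t t
| heq_sym t u : heq k t u -> heq k u t
| heq_trans t u v : heq k t u -> heq k u v -> heq k t v
| heq_comp g g' f f' : heq k g g' -> heq k f f' -> heq k (tComp g f) (tComp g' f')
| heq_tens f f' g g' : heq k f f' -> heq k g g' -> heq k (tTens f g) (tTens f' g')
| heq_add f f' g g' : heq k f f' -> heq k g g' -> heq k (tAdd f g) (tAdd f' g')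
| heq_scal c f f' : heq k f f' -> heq k (tScal c f) (tScal c f')
| heq_compA h g f : wt k (tComp h (tComp g f)) ->
    heq k (tComp h (tComp g f)) (tComp (tComp h g) f)
| heq_id_l f : forall a b, ty k f = Some (a, b) -> heq k (tComp (tId b) f) f
| heq_id_r f : forall a b, ty k f = Some (a, b) -> heq k (tComp f (tId a)) f
| heq_addA f g h : wt k (tAdd f (tAdd g h)) ->
    heq k (tAdd f (tAdd g h)) (tAdd (tAdd f g) h)
| heq_addC f g : wt k (tAdd f g) -> heq k (tAdd f g) (tAdd g f)
| heq_add0 f : forall a b, ty k f = Some (a, b) -> heq k (tAdd f (tZero a b)) f
| heq_addN f : forall a b, ty k f = Some (a, b) -> heq k (tAdd f (tOpp f)) (tZero a b)
| heq_scalA c d f : wt k f -> heq k (tScal c (tScal d f)) (tScal (c * d)%R f)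
| heq_scal1 f : wt k f -> heq k (tScal 1%R f) f
| heq_scalDl c d f : wt k f ->
    heq k (tScal (c + d)%R f) (tAdd (tScal c f) (tScal d f))
| heq_scalDr c f g : wt k (tAdd f g) ->
    heq k (tScal c (tAdd f g)) (tAdd (tScal c f) (tScal c g))
| heq_compDl h f g : wt k (tComp (tAdd f g) h) ->
    heq k (tComp (tAdd f g) h) (tAdd (tComp f h) (tComp g h))
| heq_compDr h f g : wt k (tComp h (tAdd f g)) ->
    heq k (tComp h (tAdd f g)) (tAdd (tComp h f) (tComp h g))
| heq_compZl c g f : wt k (tComp (tScal c g) f) ->
    heq k (tComp (tScal c g) f) (tScal c (tComp g f))
| heq_compZr c g f : wt k (tComp g (tScal c f)) ->
    heq k (tComp g (tScal c f)) (tScal c (tComp g f))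
| heq_tensDl h f g : wt k (tTens (tAdd f g) h) ->
    heq k (tTens (tAdd f g) h) (tAdd (tTens f h) (tTens g h))
| heq_tensDr h f g : wt k (tTens h (tAdd f g)) ->
    heq k (tTens h (tAdd f g)) (tAdd (tTens h f) (tTens h g))
| heq_tensZl c g f : wt k (tTens (tScal c g) f) ->
    heq k (tTens (tScal c g) f) (tScal c (tTens g f))
| heq_tensZr c g f : wt k (tTens g (tScal c f)) ->
    heq k (tTens g (tScal c f)) (tScal c (tTens g f))
| heq_tensA f g h : wt k (tTens f (tTens g h)) ->
    heq k (tTens f (tTens g h)) (tTens (tTens f g) h)
| heq_tens1l f : wt k f -> heq k (tTens (tId [::]) f) f
| heq_tens1r f : wt k f -> heq k (tTens f (tId [::])) f
| heq_tensId a b : heq k (tTens (tId a) (tId b)) (tId (a ++ b))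
| heq_interchange f f' g g' : wt k (tTens (tComp f' f) (tComp g' g)) ->
    heq k (tComp (tTens f' g') (tTens f g)) (tTens (tComp f' f) (tComp g' g))
| heq_ss : heq k (tComp tS tS) (tId (up ++ up))
| heq_braid :
    heq k (tComp (tTens tS (tId up)) (tComp (tTens (tId up) tS) (tTens tS (tId up))))
          (tComp (tTens (tId up) tS) (tComp (tTens tS (tId up)) (tTens (tId up) tS)))
| heq_dAHA :
    heq k (tSub (tComp (tTens tX (tId up)) tS) (tComp tS (tTens (tId up) tX)))
          (tId (up ++ up))
| heq_adj1 : heq k (tComp (tTens tD (tId up)) (tTens (tId up) tC)) (tId up)
| heq_adj2 : heq k (tComp (tTens (tId dn) tD) (tTens tC (tId dn))) (tId dn)
(* relations (I), k >= 0: inverse of [t ; d o (x^r (x) 1)]_r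
   is the row [tInvT, tInvC r]_r *)
| heq_I1 : (0 <= k)%R ->
    heq k (tAdd (tComp tInvT tT)
                (tsum (up ++ dn) (up ++ dn)
                   [seq tComp (tInvC r) (dr r) | r <- iota 0 (absz k)]))
          (tId (up ++ dn))
| heq_I2 : (0 <= k)%R -> heq k (tComp tT tInvT) (tId (dn ++ up))
| heq_I3 r : (0 <= k)%R -> (r < absz k)%N ->
    heq k (tComp tT (tInvC r)) (tZero [::] (dn ++ up))
| heq_I4 r : (0 <= k)%R -> (r < absz k)%N ->
    heq k (tComp (dr r) tInvT) (tZero (dn ++ up) [::])
| heq_I5 r s : (0 <= k)%R -> (r < absz k)%N -> (s < absz k)%N ->
    heq k (tComp (dr r) (tInvC s)) (delta r s)
(* relations (I), k < 0: inverse of the row [t, (1 (x) x^r) o c]_r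
   is the column [tInvT ; tInvE r]_r *)
| heq_J1 : (k < 0)%R ->
    heq k (tAdd (tComp tT tInvT)
                (tsum (dn ++ up) (dn ++ up)
                   [seq tComp (cr r) (tInvE r) | r <- iota 0 (absz k)]))
          (tId (dn ++ up))
| heq_J2 : (k < 0)%R -> heq k (tComp tInvT tT) (tId (up ++ dn))
| heq_J3 r : (k < 0)%R -> (r < absz k)%N ->
    heq k (tComp tInvT (cr r)) (tZero [::] (up ++ dn))
| heq_J4 r : (k < 0)%R -> (r < absz k)%N ->
    heq k (tComp (tInvE r) tT) (tZero (up ++ dn) [::])
| heq_J5 r s : (k < 0)%R -> (r < absz k)%N -> (s < absz k)%N ->
    heq k (tComp (tInvE r) (cr s)) (delta r s).

(* F, acting on representative terms, induces a strict monoidal K-linear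
   functor Heis_k1 -> (Heis_k2)^op whose object map is swapo. *)
Definition op_monoidal_functor (k1 k2 : int) (F : term -> term) : Prop :=
  (forall t a b, ty k1 t = Some (a, b) -> ty k2 (F t) = Some (swapo b, swapo a)) /\
  (forall t u, wt k1 t -> heq k1 t u -> heq k2 (F t) (F u)) /\
  (forall a, heq k2 (F (tId a)) (tId (swapo a))) /\
      (forall g f, wt k1 (tComp g f) -> heq k2 (F (tComp g f)) (tComp (F f) (F g))) /\
      (forall f g, wt k1 (tTens f g) -> heq k2 (F (tTens f g)) (tTens (F f) (F g))) /\
      (forall f g, wt k1 (tAdd f g) -> heq k2 (F (tAdd f g)) (tAdd (F f) (F g))) /\
      (forall c f, wt k1 f -> heq k2 (F (tScal c f)) (tScal c (F f))).

End Terms.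
Arguments tX {K}. Arguments tS {K}. Arguments tC {K}. Arguments tD {K}.
Arguments tInvT {K}. Arguments tId {K}. Arguments tInvC {K}. Arguments tInvE {K}.
Arguments tZero {K}. Arguments xpow {K}. Arguments tT {K}. Arguments tX' {K}.
Arguments tS' {K}. Arguments dr {K}. Arguments cr {K}. Arguments delta {K}.

(* Main.v *)
Require Import Defs.
From mathcomp Require Import all_boot all_order all_algebra.
From Stdlib Require Import Setoid Morphisms.
Import Order.TTheory GRing.Theory Num.Theory.
Set Implicit Arguments. Unset Strict Implicit. Unset Printing Implicit Defensive.


Section Base.
Variable K : comPzRingType.
Variable k : int.
Local Notation term := (term K).

Global Instance heq_Equiv : Equivalence (@heq K k).
Proof. split; [exact: heq_refl| exact: heq_sym | exact: heq_trans]. Qed.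
Global Instance tComp_Proper : Proper (@heq K k ==> @heq K k ==> @heq K k) (@tComp K).
Proof. move=> ? ? ? ? ? ?; exact: heq_comp. Qed.
Global Instance tTens_Proper : Proper (@heq K k ==> @heq K k ==> @heq K k) (@tTens K).
Proof. move=> ? ? ? ? ? ?; exact: heq_tens. Qed.
Global Instance tAdd_Proper : Proper (@heq K k ==> @heq K k ==> @heq K k) (@tAdd K).
Proof. move=> ? ? ? ? ? ?; exact: heq_add. Qed.
Global Instance tScal_Proper c : Proper (@heq K k ==> @heq K k) (@tScal K c).
Proof. move=> ? ? ?; exact: heq_scal. Qed.

Ltac tyc := repeat (match goal with
  | H : is_true (_ != None) |- _ => move: H
  | |- context[match ty ?k ?t with _ => _ end] => case: (ty k t) => [[? ?]|] //=
  | |- context[?a == ?b] => case: (a =P b) => [?|] //=; try subst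
  | |- context[if ?b then _ else _] => case: ifP => ? //=
  end); rewrite ?catA ?cats0 //.

Lemma ty_xpow r : ty k (@xpow K r) = Some (up, up).
Proof. by elim: r => //= r ->. Qed.
Lemma ty_delta r s : ty k (@delta K r s) = Some ([::], [::]).
Proof. by rewrite /delta; case: eqP. Qed.
Lemma ty_tsum a b (fs : seq term) :
  all (fun f => ty k f == Some (a, b)) fs -> ty k (tsum a b fs) = Some (a, b).
Proof. elim: fs => //= f fs IH /andP[/eqP -> /IH ->]; by rewrite eqxx. Qed.

Ltac rwty := repeat match goal with H : ty ?k ?a = ?b |- _ => rewrite H; clear H end.

Lemma heq_ty (t u : term) : heq k t u -> ty k t = ty k u.
Proof.
elim=> //=; clear; rewrite /wt /=; intros; try congruence; rwty;
  repeat match goal with H : is_true ?b |- _ => rewrite H /=; clear H end;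
  rewrite ?ty_xpow ?ty_delta; try (rewrite ty_tsum; last first); tyc; intros; try congruence.
all: rewrite all_map; apply/allP => r; rewrite mem_iota /= => Hr; by rewrite /= H Hr ty_xpow.
Qed.

Hint Resolve heq_refl : core.
Lemma wt_ty t a b : ty k t = Some (a, b) -> wt k (t : term).
Proof. by rewrite /wt => ->. Qed.

Ltac wt_tac := rewrite /wt /=; repeat match goal with H : ty _ ?a = _ |- context [ty _ ?a] => rewrite H /= end; rewrite ?eqxx //.

Lemma idsplit a b : heq k (tId (a ++ b) : term) (tTens (tId a) (tId b)).
Proof. symmetry; exact: heq_tensId. Qed.

Lemma compA' (h g f : term) a b c e : ty k f = Some (a, b) -> ty k g = Some (b, c) -> ty k h = Some (c, e) ->
  heq k (tComp h (tComp g f)) (tComp (tComp h g) f).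
Proof. move=> Hf Hg Hh; apply: heq_compA; wt_tac. Qed.

Lemma tensA' (f g h : term) a b c e x y : ty k f = Some (a, b) -> ty k g = Some (c, e) -> ty k h = Some (x, y) ->
  heq k (tTens f (tTens g h)) (tTens (tTens f g) h).
Proof. move=> Hf Hg Hh; apply: heq_tensA; wt_tac. Qed.

Lemma interch (f f' g g' : term) a b c d e h : ty k f = Some (a, b) -> ty k f' = Some (b, c) ->
  ty k g = Some (d, e) -> ty k g' = Some (e, h) ->
  heq k (tComp (tTens f' g') (tTens f g)) (tTens (tComp f' f) (tComp g' g)).
Proof. move=> H1 H2 H3 H4; apply: heq_interchange; wt_tac. Qed.

Lemma idl (f : term) a b : ty k f = Some (a, b) -> heq k (tComp (tId b) f) f.
Proof. exact: heq_id_l. Qed.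
Lemma idr (f : term) a b : ty k f = Some (a, b) -> heq k (tComp f (tId a)) f.
Proof. exact: heq_id_r. Qed.

Lemma test (f : term) a b : ty k f = Some (a, b) -> heq k (tComp (tComp (tId b) f) (tId a)) f.
Proof. move=> Hf. rewrite (idl Hf). rewrite (idr Hf). done. Qed.
End Base.


Ltac wt_tac := rewrite /wt /=; repeat match goal with H : ty _ ?a = _ |- context [ty _ ?a] => rewrite H /= end; rewrite ?eqxx //.

Definition layer := (obj * nat * obj)%type.
Definition gdom (g : nat) : obj := match g with 0 => up | 1 => up ++ up | 2 => [::] | _ => up ++ dn end.
Definition gcod (g : nat) : obj := match g with 0 => up | 1 => up ++ up | 2 => dn ++ up | _ => [::] end.
Definition ldom (L : layer) : obj := let: (p, g, q) := L in (p ++ gdom g) ++ q.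
Definition lcod (L : layer) : obj := let: (p, g, q) := L in (p ++ gcod g) ++ q.
Fixpoint endD (X : obj) (Ls : seq layer) : obj :=
  match Ls with [::] => X | L :: Ls' => endD (lcod L) Ls' end.
Fixpoint typedD (X : obj) (Ls : seq layer) : bool :=
  match Ls with [::] => true | L :: Ls' => (ldom L == X) && typedD (lcod L) Ls' end.
Definition wr (c : obj) (L : layer) : layer := let: (p, g, q) := L in (p, g, q ++ c).
Definition wl (b : obj) (L : layer) : layer := let: (p, g, q) := L in (b ++ p, g, q).

#[global] Hint Resolve heq_refl : core.

Section Engine.
Variable K : comPzRingType.
Variable k : int.
Local Notation term := (term K).

Definition gterm (g : nat) : term := match g with 0 => tX | 1 => tS | 2 => tC | _ => tD end.
Definition lterm (L : layer) : term := let: (p, g, q) := L in tTens (tTens (tId p) (gterm g)) (tId q).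
Fixpoint evalD (X : obj) (Ls : seq layer) : term :=
  match Ls with [::] => tId X | L :: Ls' => tComp (evalD (lcod L) Ls') (lterm L) end.

Lemma tyT (f g : term) a b c d : ty k f = Some (a, b) -> ty k g = Some (c, d) -> ty k (tTens f g) = Some (a ++ c, b ++ d).
Proof. by move=> /= -> ->. Qed.
Lemma tyC (g f : term) a b c : ty k f = Some (a, b) -> ty k g = Some (b, c) -> ty k (tComp g f) = Some (a, c).
Proof. by move=> /= -> ->; rewrite eqxx. Qed.

Lemma ty_gterm g : ty k (gterm g) = Some (gdom g, gcod g).
Proof. by case: g => [|[|[|]]]. Qed.
Lemma ty_lterm L : ty k (lterm L) = Some (ldom L, lcod L).
Proof. by case: L => [[p g] q] /=; rewrite ty_gterm. Qed.
Lemma ty_evalD X Ls : typedD X Ls -> ty k (evalD X Ls) = Some (X, endD X Ls).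
Proof.
elim: Ls X => //= L Ls IH X /andP[/eqP HL /IH ->]; by rewrite ty_lterm HL eqxx.
Qed.

Lemma endD_cat X L1 L2 : endD X (L1 ++ L2) = endD (endD X L1) L2.
Proof. by elim: L1 X => //= L L1 IH X. Qed.
Lemma typedD_cat X L1 L2 : typedD X (L1 ++ L2) = typedD X L1 && typedD (endD X L1) L2.
Proof. elim: L1 X => //= L L1 IH X; by rewrite IH andbA. Qed.

Lemma evalD_cat X L1 L2 : typedD X (L1 ++ L2) ->
  heq k (evalD X (L1 ++ L2)) (tComp (evalD (endD X L1) L2) (evalD X L1)).
Proof.
elim: L1 X => /= [|L L1 IH] X.
  move=> H; symmetry; exact: (idr (ty_evalD H)).
move=> /andP[/eqP HL H]; rewrite (IH _ H).
move: H; rewrite typedD_cat => /andP[H1 H2].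
by symmetry; apply: compA'; [exact: ty_lterm | exact: (ty_evalD H1) | exact: (ty_evalD H2)].
Qed.

Lemma lcod_wr c L : lcod (wr c L) = lcod L ++ c.
Proof. by case: L => [[p g] q] /=; rewrite !catA. Qed.
Lemma ldom_wr c L : ldom (wr c L) = ldom L ++ c.
Proof. by case: L => [[p g] q] /=; rewrite !catA. Qed.
Lemma lcod_wl c L : lcod (wl c L) = c ++ lcod L.
Proof. by case: L => [[p g] q] /=; rewrite !catA. Qed.
Lemma ldom_wl c L : ldom (wl c L) = c ++ ldom L.
Proof. by case: L => [[p g] q] /=; rewrite !catA. Qed.

Lemma typedD_wr c X L : typedD X L -> typedD (X ++ c) (map (wr c) L) /\ endD (X ++ c) (map (wr c) L) = endD X L ++ c.
Proof.
elim: L X => //= L Ls IH X /andP[/eqP HL /IH[]]; rewrite lcod_wr ldom_wr HL => -> ->; by rewrite eqxx.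
Qed.
Lemma typedD_wl c X L : typedD X L -> typedD (c ++ X) (map (wl c) L) /\ endD (c ++ X) (map (wl c) L) = c ++ endD X L.
Proof.
elim: L X => //= L Ls IH X /andP[/eqP HL /IH[]]; rewrite lcod_wl ldom_wl HL => -> ->; by rewrite eqxx.
Qed.

Lemma lterm_wr c L : heq k (lterm (wr c L)) (tTens (lterm L) (tId c)).
Proof.
case: L => [[p g] q] /=; rewrite idsplit.
by apply: tensA'; rewrite /= ?ty_gterm.
Qed.

Lemma lterm_wl c L : heq k (lterm (wl c L)) (tTens (tId c) (lterm L)).
Proof.
case: L => [[p g] q] /=; rewrite idsplit.
have e1 := tensA' (k:=k) (f:=tId c) (g := tId p) (h := gterm g) (erefl _) (erefl _) (ty_gterm g).
have e2 := tensA' (k:=k) (f:=tId c) (g := tTens (tId p) (gterm g)) (h := tId q) (erefl _) _ (erefl _).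
rewrite -e1 -e2 //; exact: (tyT (f:=tId p) (erefl _) (ty_gterm g)).
Qed.

Lemma evalD_wr c X L : typedD X L -> heq k (evalD (X ++ c) (map (wr c) L)) (tTens (evalD X L) (tId c)).
Proof.
elim: L X => /= [|L Ls IH] X; first by rewrite idsplit.
move=> /andP[/eqP HL HT]; rewrite lcod_wr (IH _ HT) lterm_wr.
rewrite (interch (f := lterm L) (g := tId c)) ?ty_lterm ?(ty_evalD HT) //.
by rewrite (idl (f := tId c) (a := c)).
Qed.

Lemma evalD_wl c X L : typedD X L -> heq k (evalD (c ++ X) (map (wl c) L)) (tTens (tId c) (evalD X L)).
Proof.
elim: L X => /= [|L Ls IH] X; first by rewrite idsplit.
move=> /andP[/eqP HL HT]; rewrite lcod_wl (IH _ HT) lterm_wl.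
rewrite (interch (g := lterm L) (f := tId c)) ?ty_lterm ?(ty_evalD HT) //.
by rewrite (idl (f := tId c) (a := c)).
Qed.


Fixpoint fl (t : term) : option (obj * obj * seq layer) :=
  match t with
  | tId a => Some (a, a, [::])
  | tX => Some (up, up, [:: ([::], 0, [::])])
  | tS => Some (up ++ up, up ++ up, [:: ([::], 1, [::])])
  | tC => Some ([::], dn ++ up, [:: ([::], 2, [::])])
  | tD => Some (up ++ dn, [::], [:: ([::], 3, [::])])
  | tComp g f =>
      match fl f, fl g with
      | Some (a, b, Lf), Some (b', c, Lg) => if b == b' then Some (a, c, Lf ++ Lg) else None
      | _, _ => None
      end
  | tTens f g =>
      match fl f, fl g with
      | Some (a, b, Lf), Some (c, e, Lg) => Some (a ++ c, b ++ e, map (wr c) Lf ++ map (wl b) Lg)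
      | _, _ => None
      end
  | _ => None
  end.

Lemma gen_single g : heq k (gterm g) (evalD (gdom g) [:: ([::], g, [::])]).
Proof.
rewrite /= idl; last exact: (ty_lterm ([::], g, [::])).
by case: g => [|[|[|g]]]; rewrite heq_tens1r ?heq_tens1l.
Qed.

Lemma fl_sound t a b L : fl t = Some (a, b, L) ->
  [/\ typedD a L, endD a L = b & heq k t (evalD a L)].
Proof.
elim: t a b L => //=.
- by move=> o a b L [<- <- <-].
- move=> a b L [<- <- <-]; split => //; exact: (gen_single 0).
- move=> a b L [<- <- <-]; split => //; exact: (gen_single 1).
- move=> a b L [<- <- <-]; split => //; exact: (gen_single 2).
- move=> a b L [<- <- <-]; split => //; exact: (gen_single 3).
- move=> g IHg f IHf a c L.
  case Ef: (fl f) => [[[a' b'] Lf]|] //; case Eg: (fl g) => [[[b'' c'] Lg]|] //.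
  case: eqP => // Eb [<- <- <-]; subst b''.
  have [T1 E1 H1] := IHf _ _ _ Ef; have [T2 E2 H2] := IHg _ _ _ Eg.
  have T : typedD a' (Lf ++ Lg) by rewrite typedD_cat T1 E1 T2.
  split => //; first by rewrite endD_cat E1.
  by rewrite (evalD_cat T) E1 -H1 -H2.
- move=> f IHf g IHg x y L.
  case Ef: (fl f) => [[[a b] Lf]|] //; case Eg: (fl g) => [[[c e] Lg]|] //.
  case=> <- <- <-.
  have [T1 E1 H1] := IHf _ _ _ Ef; have [T2 E2 H2] := IHg _ _ _ Eg.
  have [T1' E1'] := typedD_wr c T1; have [T2' E2'] := typedD_wl b T2.
  have T : typedD (a ++ c) (map (wr c) Lf ++ map (wl b) Lg) by rewrite typedD_cat T1' E1' E1 T2'.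
  split => //; first by rewrite endD_cat E1' E1 E2' E2.
  rewrite (evalD_cat T) E1' E1 (evalD_wl _ T2) (evalD_wr _ T1).
  rewrite (interch (f := evalD a Lf) (g := tId c)) ?(ty_evalD T1) ?(ty_evalD T2) ?E1 //.
  rewrite (idl (a := a)) ?(ty_evalD T1) ?E1 // (idr (b := e)) ?(ty_evalD T2) ?E2 //.
  by rewrite -H1 -H2.
Qed.

Lemma IX (f h : term) A B C D : ty k f = Some (A, B) -> ty k h = Some (C, D) ->
  heq k (tComp (tTens (tId B) h) (tTens f (tId C))) (tComp (tTens f (tId D)) (tTens (tId A) h)).
Proof.
move=> Hf Hh.
rewrite (interch (f := f) (f' := tId B) (g := tId C) (g' := h)) //.
rewrite (interch (f := tId A) (f' := f) (g := h) (g' := tId D)) //.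
rewrite (idl Hf) (idr Hh) (idr Hf) (idl Hh); try done.
all: eassumption.
Qed.

Lemma swapA p m q g1 g2 :
 heq k (tComp (lterm ((p ++ gcod g1) ++ m, g2, q)) (lterm (p, g1, (m ++ gdom g2) ++ q)))
     (tComp (lterm (p, g1, (m ++ gcod g2) ++ q)) (lterm ((p ++ gdom g1) ++ m, g2, q))).
Proof.
rewrite (lterm_wl (p ++ gcod g1) (m, g2, q)) (lterm_wl (p ++ gdom g1) (m, g2, q)) /=.
apply: IX; [exact: (tyT (f := tId p) (erefl _) (ty_gterm g1)) | exact: (ty_lterm (m, g2, q))].
Qed.

Definition swap2 (L1 L2 : layer) : option (seq layer) :=
  let: (p1, g1, q1) := L1 in let: (p2, g2, q2) := L2 in
  if size p1 + size (gcod g1) <= size p2 then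
    let m := drop (size p1 + size (gcod g1)) p2 in
    if (p2 == (p1 ++ gcod g1) ++ m) && (q1 == (m ++ gdom g2) ++ q2)
    then Some [:: ((p1 ++ gdom g1) ++ m, g2, q2); (p1, g1, (m ++ gcod g2) ++ q2)] else None
  else if size p2 + size (gdom g2) <= size p1 then
    let m := drop (size p2 + size (gdom g2)) p1 in
    if (p1 == (p2 ++ gdom g2) ++ m) && (q2 == (m ++ gcod g1) ++ q1)
    then Some [:: (p2, g2, (m ++ gdom g1) ++ q1); ((p2 ++ gcod g2) ++ m, g1, q1)] else None
  else None.

Lemma seg2 Y L1 L2 : typedD Y [:: L1; L2] -> heq k (evalD Y [:: L1; L2]) (tComp (lterm L2) (lterm L1)).
Proof. move=> _ /=; by rewrite (idl (ty_lterm L2)). Qed.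

Lemma swap2_sound Y L1 L2 s : swap2 L1 L2 = Some s -> typedD Y [:: L1; L2] -> typedD Y s ->
  heq k (evalD Y [:: L1; L2]) (evalD Y s).
Proof.
case: L1 => [[p1 g1] q1]; case: L2 => [[p2 g2] q2].
rewrite [swap2 _ _]/=.
case: ifP => _.
  set m := drop _ p2.
  case: ifP => // /andP[/eqP E1 /eqP E2] [<-] T1 T2.
  rewrite (seg2 T1) (seg2 T2) E1 E2; exact: swapA.
case: ifP => // _; set m := drop _ p1.
case: ifP => // /andP[/eqP E1 /eqP E2] [<-] T1 T2.
rewrite (seg2 T1) (seg2 T2) E1 E2; symmetry; exact: swapA.
Qed.

Lemma splice X pre s1 s2 post : typedD X (pre ++ s1 ++ post) -> typedD X (pre ++ s2 ++ post) ->
  heq k (evalD (endD X pre) s1) (evalD (endD X pre) s2) ->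
  heq k (evalD X (pre ++ s1 ++ post)) (evalD X (pre ++ s2 ++ post)).
Proof.
move=> T1 T2 H.
have T1' := T1; have T2' := T2.
rewrite !typedD_cat in T1' T2'; case/and3P: T1' => _ Ts1 Tp1; case/and3P: T2' => _ Ts2 Tp2.
have E : endD (endD X pre) s1 = endD (endD X pre) s2.
  by have := heq_ty H; rewrite (ty_evalD Ts1) (ty_evalD Ts2) => -[].
rewrite (evalD_cat T1) (evalD_cat T2).
have U1 : typedD (endD X pre) (s1 ++ post) by rewrite typedD_cat Ts1.
have U2 : typedD (endD X pre) (s2 ++ post) by rewrite typedD_cat Ts2.
rewrite (evalD_cat U1) (evalD_cat U2) E H; done.
Qed.

Definition rX (r : nat) : obj := match r with 0 => up | 1 => dn | 2 => up ++ up | _ => up ++ up ++ up end.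
Definition rL (r : nat) : seq layer := match r with
  | 0 => [:: (up, 2, [::]); ([::], 3, up)]
  | 1 => [:: ([::], 2, dn); (dn, 3, [::])]
  | 2 => [:: ([::], 1, [::]); ([::], 1, [::])]
  | _ => [:: ([::], 1, up); (up, 1, [::]); ([::], 1, up)] end.
Definition rR (r : nat) : seq layer := match r with
  | 0 | 1 | 2 => [::]
  | _ => [:: (up, 1, [::]); ([::], 1, up); (up, 1, [::])] end.

Lemma rule_ok r : heq k (evalD (rX r) (rL r)) (evalD (rX r) (rR r)).
Proof.
case: r => [|[|[|r]]].
- have [_ _ H] := @fl_sound (tComp (tTens tD (tId up)) (tTens (tId up) tC)) up up (rL 0) (erefl _).
  by rewrite -H heq_adj1.
- have [_ _ H] := @fl_sound (tComp (tTens (tId dn) tD) (tTens tC (tId dn))) dn dn (rL 1) (erefl _).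
  by rewrite -H heq_adj2.
- have [_ _ H] := @fl_sound (tComp tS tS) (up ++ up) (up ++ up) (rL 2) (erefl _).
  by rewrite -H heq_ss.
- have [_ _ H] := @fl_sound (tComp (tTens tS (tId up)) (tComp (tTens (tId up) tS) (tTens tS (tId up))))
     (up ++ up ++ up) (up ++ up ++ up) (rL 3) (erefl _).
  have [_ _ H'] := @fl_sound (tComp (tTens (tId up) tS) (tComp (tTens tS (tId up)) (tTens (tId up) tS)))
     (up ++ up ++ up) (up ++ up ++ up) (rR 3) (erefl _).
  by rewrite -H -H' heq_braid.
Qed.

Lemma rule_typed r : typedD (rX r) (rL r) && typedD (rX r) (rR r).
Proof. by case: r => [|[|[|r]]]. Qed.

Lemma wh_ok X L1 L2 p q : typedD X L1 -> typedD X L2 -> heq k (evalD X L1) (evalD X L2) ->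
  heq k (evalD (p ++ (X ++ q)) (map (wl p) (map (wr q) L1))) (evalD (p ++ (X ++ q)) (map (wl p) (map (wr q) L2))).
Proof.
move=> T1 T2 H.
have [T1' _] := typedD_wr q T1; have [T2' _] := typedD_wr q T2.
by rewrite (evalD_wl _ T1') (evalD_wl _ T2') (evalD_wr _ T1) (evalD_wr _ T2) H.
Qed.

Inductive move := MSwap of nat | MRule of nat & nat & bool & obj & obj.

Definition step (X : obj) (m : move) (Ls : seq layer) : option (seq layer) :=
  match m with
  | MSwap i =>
      match drop i Ls with
      | L1 :: L2 :: rest =>
          match swap2 L1 L2 with Some s => Some (take i Ls ++ s ++ rest) | None => None end
      | _ => None
      end
  | MRule i r rev p q =>
      let l := if rev then rR r else rL r in
      let rr := if rev then rL r else rR r in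
      let seg := map (wl p) (map (wr q) l) in
      if (take (size seg) (drop i Ls) == seg) && (endD X (take i Ls) == p ++ (rX r ++ q))
      then Some (take i Ls ++ map (wl p) (map (wr q) rr) ++ drop (size seg) (drop i Ls))
      else None
  end.

Lemma step_sound X m Ls Ls' : typedD X Ls -> typedD X Ls' -> step X m Ls = Some Ls' ->
  heq k (evalD X Ls) (evalD X Ls').
Proof.
move=> T T'; case: m => [i|i r rev p q] /=.
  case E: (drop i Ls) => [|L1 [|L2 rest]] //.
  case S: (swap2 L1 L2) => [s|] // [EL]; subst Ls'.
  have EL : Ls = take i Ls ++ [:: L1; L2] ++ rest by rewrite /= -E cat_take_drop.
  rewrite {1}EL; apply: splice => //; first by rewrite -EL.
  move: (T) (T'); rewrite {1}EL !typedD_cat => /and3P[_ T1 _] /and3P[_ T2 _].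
  exact: swap2_sound S T1 T2.
case: ifP => // /andP[/eqP E1 /eqP E2] [EL]; subst Ls'.
have EL : Ls = take i Ls ++ map (wl p) (map (wr q) (if rev then rR r else rL r)) ++
   drop (size (map (wl p) (map (wr q) (if rev then rR r else rL r)))) (drop i Ls).
  by rewrite -{1}E1 !cat_take_drop.
rewrite {1}EL; apply: splice => //; first by rewrite -EL.
rewrite E2.
have /andP[T1 T2] := rule_typed r.
case: rev {E1 T T' EL}; apply: wh_ok => //; [symmetry|]; exact: rule_ok.
Qed.

Fixpoint run (X : obj) (ms : seq move) (Ls : seq layer) : option (seq layer) :=
  match ms with
  | [::] => Some Ls
  | m :: ms' => match step X m Ls with
                | Some Ls' => if typedD X Ls' then run X ms' Ls' else None
                | None => None end
  end.

Lemma run_sound X ms Ls M : typedD X Ls -> run X ms Ls = Some M -> heq k (evalD X Ls) (evalD X M).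
Proof.
elim: ms Ls => [|m ms IH] Ls T /=; first by case=> ->.
case S: (step X m Ls) => [Ls'|] //; case: ifP => // T' R.
by rewrite (step_sound T T' S) (IH _ T' R).
Qed.

Definition check (t1 t2 : term) (ms1 ms2 : seq move) : bool :=
  match fl t1, fl t2 with
  | Some (a1, b1, L1), Some (a2, b2, L2) =>
      (a1 == a2) && match run a1 ms1 L1, run a2 ms2 L2 with
                    | Some M1, Some M2 => M1 == M2 | _, _ => false end
  | _, _ => false
  end.

Lemma check_sound t1 t2 ms1 ms2 : check t1 t2 ms1 ms2 -> heq k t1 t2.
Proof.
rewrite /check.
case E1: (fl t1) => [[[a1 b1] L1]|] //; case E2: (fl t2) => [[[a2 b2] L2]|] //.
case/andP => /eqP Ea; subst a2.
case R1: (run a1 ms1 L1) => [M1|] //; case R2: (run a1 ms2 L2) => [M2|] // /eqP EM; subst M2.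
have [T1 _ H1] := fl_sound E1; have [T2 _ H2] := fl_sound E2.
by rewrite H1 H2 (run_sound T1 R1) (run_sound T2 R2).
Qed.
End Engine.


Fixpoint om {K : comPzRingType} (t : term K) : term K :=
  match t with
  | tId a => tId (swapo a)
  | tX => tX'
  | tS => tOpp tS'
  | tC => tD
  | tD => tC
  | tInvT => tOpp tInvT
  | tInvC r => tInvE r
  | tInvE r => tInvC r
  | tComp g f => tComp (om f) (om g)
  | tTens f g => tTens (om f) (om g)
  | tZero a b => tZero (swapo b) (swapo a)
  | tAdd f g => tAdd (om f) (om g)
  | tScal c f => tScal c (om f)
  end.

Section D.
Variable K : comPzRingType.
Variable k : int.
Local Notation term := (term K).
Definition T3 : term := tComp (tComp (tTens tD (tId (dn++up))) (tTens (tId up) (tTens tS' (tId up)))) (tTens (tId (up++dn)) tC).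
Definition T5 : term := tComp (tComp (tTens tD (tId (up++up))) (tTens (tId up) (tTens tT (tId up)))) (tTens (tId (up++up)) tC).
Definition C2 : term := tComp (tTens (tId dn) (tTens tC (tId up))) tC.
Definition D2 : term := tComp tD (tTens (tId up) (tTens tD (tId dn))).
Definition Mctx (h : term) : term := tComp (tTens (tId (dn++dn)) D2) (tComp (tTens (tId (dn++dn)) (tTens h (tId (dn++dn)))) (tTens C2 (tId (dn ++ dn)))).

Lemma D4 : heq k (om (@tX' K)) tX.
Proof.
apply: (@check_sound K k _ _ [:: MSwap 0; MSwap 1; MRule 2 0 false ([:: true; false]) ([::]); MSwap 1; MRule 0 0 false ([::]) ([::])] [::]).
by vm_compute.
Qed.
Lemma D3a : heq k (T3 : term) tT.
Proof.
apply: (@check_sound K k _ _ [:: MSwap 0; MSwap 1; MSwap 2; MSwap 3; MRule 4 0 false ([:: true; false; false]) ([::]); MSwap 3; MSwap 2; MSwap 1; MRule 0 0 false ([::]) ([:: false])] [::]).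
by vm_compute.
Qed.

Lemma D5a : heq k (T5 : term) tS.
Proof.
apply: (@check_sound K k _ _ [:: MSwap 0; MSwap 1; MRule 2 0 false ([:: true; false; true]) ([::]); MSwap 1; MRule 0 0 false ([::]) ([:: true])] [::]).
by vm_compute.
Qed.

Lemma D1 : heq k ((tComp (tTens tX' (tId up)) tC) : term) (tComp (tTens (tId dn) tX) tC).
Proof.
apply: (@check_sound K k _ _ [:: MSwap 0; MSwap 1; MRule 2 0 false ([:: false]) ([::])] [::]).
by vm_compute.
Qed.

Lemma D2s : heq k ((tComp tD (tTens (tId up) tX')) : term) (tComp tD (tTens tX (tId dn))).
Proof.
apply: (@check_sound K k _ _ [:: MSwap 2; MSwap 1; MRule 0 0 false ([::]) ([:: false])] [::]).
by vm_compute.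
Qed.

Lemma SSp : heq k ((tComp tS' tS') : term) (tId (dn++dn)).
Proof.
apply: (@check_sound K k _ _ [:: MSwap 4; MSwap 3; MSwap 2; MSwap 1; MSwap 0; MSwap 5; MSwap 4; MSwap 3; MSwap 2; MSwap 1; MSwap 6; MSwap 5; MSwap 4; MSwap 3; MSwap 2; MSwap 7; MSwap 6; MSwap 5; MSwap 4; MRule 3 0 false ([:: false; false; true]) ([:: false; false]); MSwap 6; MSwap 5; MSwap 4; MRule 3 0 false ([:: false; false]) ([:: true; false; false]); MRule 2 2 false ([:: false; false]) ([:: false; false]); MSwap 1; MRule 0 1 false ([::]) ([:: false]); MRule 0 1 false ([:: false]) ([::])] [::]).
by vm_compute.
Qed.

Lemma BRp : heq k ((tComp (tTens tS' (tId dn)) (tComp (tTens (tId dn) tS') (tTens tS' (tId dn)))) : term) (tComp (tTens (tId dn) tS') (tComp (tTens tS' (tId dn)) (tTens (tId dn) tS'))).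
Proof.
apply: (@check_sound K k _ _ [:: MSwap 4; MSwap 3; MSwap 2; MSwap 1; MSwap 5; MSwap 4; MSwap 3; MSwap 2; MSwap 6; MSwap 5; MSwap 4; MSwap 3; MSwap 7; MSwap 6; MSwap 5; MRule 4 0 false ([:: false; false; false; true]) ([:: true; false; false; false]); MSwap 7; MSwap 6; MSwap 5; MSwap 4; MSwap 3; MSwap 2; MSwap 1; MSwap 0; MSwap 8; MSwap 7; MSwap 6; MSwap 5; MSwap 4; MSwap 3; MSwap 2; MSwap 1; MSwap 9; MSwap 8; MSwap 7; MSwap 6; MSwap 5; MSwap 4; MSwap 3; MSwap 2; MSwap 10; MSwap 9; MSwap 8; MSwap 7; MSwap 6; MSwap 5; MSwap 4; MRule 3 0 false ([:: false; false; true]) ([:: false; false; false]); MSwap 9; MSwap 8; MSwap 7; MSwap 6; MSwap 5; MSwap 4; MRule 3 0 false ([:: false; false]) ([:: true; false; false; false]); MSwap 2; MRule 3 3 true ([:: false; false; false]) ([:: false; false; false]); MSwap 5] [:: MSwap 9; MSwap 8; MSwap 7; MSwap 6; MSwap 10; MSwap 9; MSwap 8; MSwap 7; MSwap 11; MSwap 10; MSwap 9; MSwap 8; MSwap 12; MSwap 11; MSwap 10; MRule 9 0 false ([:: false; false; false; true]) ([:: true; false; false; false]); MSwap 4; MSwap 3; MSwap 2; MSwap 1; MSwap 5; MSwap 4; MSwap 3; MSwap 2; MSwap 6; MSwap 5; MSwap 4; MSwap 3; MSwap 7; MSwap 6; MSwap 5; MSwap 4; MSwap 8; MSwap 7; MSwap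 6; MSwap 5; MSwap 9; MSwap 8; MSwap 7; MSwap 6; MSwap 10; MSwap 9; MSwap 8; MSwap 7; MSwap 11; MSwap 10; MSwap 9; MRule 8 0 false ([:: false; false; false]) ([:: true; false; false]); MSwap 0; MSwap 1; MSwap 2; MSwap 3; MSwap 4; MSwap 5; MRule 6 0 false ([:: false; false; false; true]) ([:: false; false])]).
by vm_compute.
Qed.

Lemma M1 : heq k ((Mctx (tComp tS (tTens tX (tId up)))) : term) (tComp (tTens (tId dn) tX') tS').
Proof.
apply: (@check_sound K k _ _ [::] [:: MSwap 4; MSwap 3; MSwap 2; MSwap 1; MSwap 5; MSwap 4; MSwap 3; MSwap 2; MSwap 6; MSwap 5; MSwap 4; MRule 3 0 false ([:: false; false]) ([:: true; false; false])]).
by vm_compute.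
Qed.

Lemma M2 : heq k ((Mctx (tComp (tTens (tId up) tX) tS)) : term) (tComp tS' (tTens tX' (tId dn))).
Proof.
apply: (@check_sound K k _ _ [::] [:: MSwap 2; MSwap 1; MSwap 0; MSwap 3; MSwap 2; MSwap 1; MSwap 4; MSwap 3; MSwap 2; MSwap 5; MSwap 4; MRule 3 0 false ([:: false; false; true]) ([:: false; false])]).
by vm_compute.
Qed.

Lemma M3 : heq k ((Mctx (tId (up++up))) : term) (tId (dn++dn)).
Proof.
apply: (@check_sound K k _ _ [:: MSwap 1; MRule 0 1 false ([::]) ([:: false]); MRule 0 1 false ([:: false]) ([::])] [::]).
by vm_compute.
Qed.

End D.


Lemma swapo_cat a b : swapo (a ++ b) = swapo a ++ swapo b.
Proof. exact: map_cat. Qed.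
Lemma swapoK a : swapo (swapo a) = a.
Proof. by rewrite /swapo -map_comp map_id_in // => x _ /=; rewrite negbK. Qed.
Lemma swapo_inj : injective swapo.
Proof. exact: can_inj swapoK. Qed.

Lemma invC_cond (k : int) r : (0 <= k)%R && (r < `|k|)%N -> ((- k < 0)%R && (r < `|(- k)%R|)%N).
Proof.
case/andP => k0 rk; rewrite abszN rk andbT oppr_lt0.
by rewrite lt0r k0 andbT; apply/eqP => k0'; move: rk; rewrite k0'.
Qed.
Lemma invE_cond (k : int) r : (k < 0)%R && (r < `|k|)%N -> ((0 <= - k)%R && (r < `|(- k)%R|)%N).
Proof. by case/andP => k0 rk; rewrite abszN rk andbT oppr_ge0 ltW. Qed.

Section OmTy.
Variable K : comPzRingType.
Local Notation term := (term K).

Lemma om_ty k (t : term) a b : ty k t = Some (a, b) -> ty (- k) (om t) = Some (swapo b, swapo a).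
Proof.
elim: t a b => /=.
- by move=> o a b [<- <-].
- by move=> a b [<- <-].
- by move=> a b [<- <-].
- by move=> a b [<- <-].
- by move=> a b [<- <-].
- by move=> a b [<- <-].
- move=> r a b; case: ifP => // /invC_cond -> [<- <-] //.
- move=> r a b; case: ifP => // /invE_cond -> [<- <-] //.
- move=> g IHg f IHf a c.
  case Eg: (ty k g) => [[b' c']|] //; case Ef: (ty k f) => [[a' b]|] //.
  case: eqP => // Eb [<- <-]; subst b'.
  by rewrite (IHg _ _ Eg) (IHf _ _ Ef) eqxx.
- move=> f IHf g IHg a b.
  case Ef: (ty k f) => [[a1 b1]|] //; case Eg: (ty k g) => [[a2 b2]|] //.
  by case=> <- <-; rewrite (IHg _ _ Eg) (IHf _ _ Ef) !swapo_cat.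
- by move=> o o0 a b [<- <-].
- move=> f IHf g IHg a b.
  case Ef: (ty k f) => [[a1 b1]|] //; case Eg: (ty k g) => [[a2 b2]|] //.
  case: eqP => // -[E1 E2] [<- <-]; subst a2 b2.
  by rewrite (IHg _ _ Eg) (IHf _ _ Ef) eqxx.
- move=> c f IHf a b Hf; exact: IHf.
Qed.

Lemma om_wt k (t : term) : wt k t -> wt (- k) (om t).
Proof.
rewrite /wt; case E: (ty k t) => [[a b]|] // _; by rewrite (om_ty E).
Qed.

Lemma wt_compI k (g f : term) : wt k (tComp g f) -> wt k g /\ wt k f.
Proof. by rewrite /wt /=; case: (ty k g) => [[??]|]; case: (ty k f) => [[??]|]. Qed.
Lemma wt_tensI k (g f : term) : wt k (tTens g f) -> wt k g /\ wt k f.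
Proof. by rewrite /wt /=; case: (ty k g) => [[??]|]; case: (ty k f) => [[??]|]. Qed.
Lemma wt_addI k (g f : term) : wt k (tAdd g f) -> wt k g /\ wt k f.
Proof. by rewrite /wt /=; case: (ty k g) => [[??]|]; case: (ty k f) => [[??]|]. Qed.

Lemma om_xpow_ty k r : ty k (om (@xpow K r)) = Some (dn, dn).
Proof. by have := om_ty (k := (- k)%R) (ty_xpow K (- k)%R r); rewrite opprK. Qed.
End OmTy.


Section Alg.
Variable K : comPzRingType.
Variable k : int.
Local Notation term := (term K).

Lemma oppK (f : term) : wt k f -> heq k (tScal (-1) (tScal (-1) f)) f.
Proof. move=> H; by rewrite heq_scalA // mulrNN mulr1 heq_scal1. Qed.

Lemma opp_zero a b : heq k (tOpp (tZero a b) : term) (tZero a b).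
Proof.
have H1 : heq k (tAdd (tZero a b) (tOpp (tZero a b)) : term) (tZero a b) by apply: heq_addN.
have H2 : heq k (tAdd (tOpp (tZero a b)) (tZero a b) : term) (tOpp (tZero a b)) by apply: heq_add0.
rewrite -H2 heq_addC ?H1 //; by rewrite /wt /= eqxx.
Qed.

Lemma compNN (g f : term) : wt k (tComp g f) -> heq k (tComp (tOpp g) (tOpp f)) (tComp g f).
Proof.
move=> H; rewrite /tOpp heq_compZl ?heq_compZr ?oppK //.
Qed.

Lemma D3 : heq k (om (@tT K)) (tOpp tT).
Proof.
change (om tT) with (tComp (tComp (tTens tD (tId (dn++up))) (tTens (tId up) (tTens (tOpp (@tS' K)) (tId up)))) (tTens (tId (up++dn)) tC)).
rewrite /tOpp heq_tensZl // heq_tensZr // heq_compZr // heq_compZl //.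
by rewrite -/(T3 K) D3a.
Qed.

Lemma D5 : heq k (om (@tS' K)) (tOpp tS).
Proof.
change (om tS') with (tComp (tComp (tTens tD (tId (up++up))) (tTens (tId up) (tTens (om (@tT K)) (tId up)))) (tTens (tId (up++up)) tC)).
rewrite D3 /tOpp heq_tensZl // heq_tensZr // heq_compZr // heq_compZl //.
by rewrite -/(T5 K) D5a.
Qed.

Ltac tys := repeat first [ reflexivity | eassumption | apply: tyT | apply: tyC ].

Lemma tens_comp_l (f f' : term) a b e c : ty k f = Some (a, b) -> ty k f' = Some (b, e) ->
  heq k (tTens (tComp f' f) (tId c)) (tComp (tTens f' (tId c)) (tTens f (tId c))).
Proof.
move=> Hf Hf'; rewrite (interch (f := f) (f' := f') (g := tId c) (g' := tId c)).
rewrite (idl (f := tId c) (a := c)); try done.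
all: tys.
Qed.
Lemma tens_comp_r (f f' : term) a b e c : ty k f = Some (a, b) -> ty k f' = Some (b, e) ->
  heq k (tTens (tId c) (tComp f' f)) (tComp (tTens (tId c) f') (tTens (tId c) f)).
Proof.
move=> Hf Hf'; rewrite (interch (g := f) (g' := f') (f := tId c) (f' := tId c)).
rewrite (idl (f := tId c) (a := c)); try done.
all: tys.
Qed.

Lemma om_xcup r : heq k (tComp (tTens (om (@xpow K r)) (tId up)) tC) (tComp (tTens (tId dn) (xpow r)) tC).
Proof.
elim: r => // r IH.
have HO := om_xpow_ty K k r; have HX := ty_xpow K k r.
set O := om (xpow r) in HO IH *.
rewrite /= -/O (tens_comp_l (f := tX') (f' := O) up).
rewrite -(compA' (f := tC) (g := tTens tX' (tId up)) (h := tTens O (tId up))).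
rewrite D1 (compA' (f := tC) (g := tTens (tId dn) tX) (h := tTens O (tId up))).
rewrite -(IX (f := O) (h := tX) (A := dn) (B := dn) (C := up) (D := up)).
rewrite -(compA' (f := tC) (g := tTens O (tId up)) (h := tTens (tId dn) tX)).
rewrite IH (compA' (f := tC)).
rewrite -(tens_comp_r (f := xpow r) (f' := tX)); try done.
all: tys.
Qed.

Lemma om_xcap r : heq k (tComp tD (tTens (tId up) (om (@xpow K r)))) (tComp tD (tTens (xpow r) (tId dn))).
Proof.
elim: r => // r IH.
have HO := om_xpow_ty K k r; have HX := ty_xpow K k r.
set O := om (xpow r) in HO IH *.
rewrite /= -/O (tens_comp_r (f := tX') (f' := O) up).
rewrite (compA' (h := tD) (g := tTens (tId up) O) (f := tTens (tId up) tX')).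
rewrite IH -(compA' (h := tD) (g := tTens (xpow r) (tId dn)) (f := tTens (tId up) tX')).
rewrite -(IX (f := xpow r) (h := tX') (A := up) (B := up) (C := dn) (D := dn)).
rewrite (compA' (h := tD) (g := tTens (tId up) tX')).
rewrite D2s -(compA' (h := tD)).
rewrite -(tens_comp_l (f := xpow r) (f' := tX)); try done.
all: tys.
Qed.

Lemma SSom : heq k (om (tComp tS tS : term)) (om (tId (up ++ up))).
Proof.
change (om (tComp tS tS : term)) with (tComp (tOpp (@tS' K)) (tOpp tS')).
rewrite compNN // SSp; done.
Qed.

Lemma dAHA2 : heq k (tAdd (tComp tS (tTens tX (tId up))) (tScal (-1) (tComp (tTens (tId up) tX) tS)) : term) (tId (up ++ up)).
Proof.
have H := @heq_dAHA K k.
transitivity (tComp tS (tComp (tSub (tComp (tTens tX (tId up)) tS) (tComp tS (tTens (tId up) tX))) tS) : term); last first.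
  rewrite H (idl (f := tS)) //; exact: heq_ss.
rewrite /tSub /tOpp heq_compDl // heq_compZl // heq_compDr // heq_compZr //.
apply: heq_add.
  rewrite -(compA' (f := tS) (g := tS) (h := tTens tX (tId up))) // heq_ss.
  by rewrite (idr (f := tTens tX (tId up)) (a := up ++ up) (b := up ++ up)).
apply: heq_scal.
rewrite (compA' (f := tS) (h := tS) (g := tComp tS (tTens (tId up) tX))) //.
rewrite (compA' (f := tTens (tId up) tX) (h := tS) (g := tS)) // heq_ss.
by rewrite (idl (f := tTens (tId up) tX) (a := up ++ up) (b := up ++ up)).
Qed.

Global Instance Mctx_Proper : Proper (heq k ==> heq k) (@Mctx K).
Proof. move=> h h' H; by rewrite /Mctx H. Qed.

Lemma Mctx_add (h1 h2 : term) : ty k h1 = Some (up ++ up, up ++ up) -> ty k h2 = Some (up ++ up, up ++ up) ->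
  heq k (Mctx (tAdd h1 h2)) (tAdd (Mctx h1) (Mctx h2)).
Proof.
move=> H1 H2; rewrite /Mctx heq_tensDl ?heq_tensDr ?heq_compDl ?heq_compDr //.
all: by rewrite /wt /= ?H1 ?H2.
Qed.

Lemma Mctx_scal c (h : term) : ty k h = Some (up ++ up, up ++ up) ->
  heq k (Mctx (tScal c h)) (tScal c (Mctx h)).
Proof.
move=> H; rewrite /Mctx heq_tensZl ?heq_tensZr ?heq_compZl ?heq_compZr //.
all: by rewrite /wt /= ?H.
Qed.

Lemma dAHAom : heq k (om (tSub (tComp (tTens tX (tId up)) tS) (tComp tS (tTens (tId up) tX))) : term) (om (tId (up ++ up))).
Proof.
change (om (tSub (tComp (tTens tX (tId up)) tS) (tComp tS (tTens (tId up) tX))) : term) with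
  (tAdd (tComp (tOpp (@tS' K)) (tTens tX' (tId dn))) (tScal (-1) (tComp (tTens (tId dn) tX') (tOpp tS')))).
rewrite /tOpp heq_compZl // heq_compZr // oppK // -M2 -M1 heq_addC //.
rewrite -Mctx_scal // -Mctx_add // dAHA2 M3; done.
Qed.

Lemma BRom : heq k (om (tComp (tTens tS (tId up)) (tComp (tTens (tId up) tS) (tTens tS (tId up)))) : term)
                   (om (tComp (tTens (tId up) tS) (tComp (tTens tS (tId up)) (tTens (tId up) tS)))).
Proof.
change (om (tComp (tTens tS (tId up)) (tComp (tTens (tId up) tS) (tTens tS (tId up)))) : term) with
  (tComp (tComp (tTens (tOpp (@tS' K)) (tId dn)) (tTens (tId dn) (tOpp tS'))) (tTens (tOpp tS') (tId dn))).
change (om (tComp (tTens (tId up) tS) (tComp (tTens tS (tId up)) (tTens (tId up) tS))) : term) with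
  (tComp (tComp (tTens (tId dn) (tOpp (@tS' K))) (tTens (tOpp tS') (tId dn))) (tTens (tId dn) (tOpp tS'))).
rewrite /tOpp !heq_tensZl // !heq_tensZr //.
rewrite !heq_compZl // !heq_compZr // !heq_compZl // !heq_scalA //.
rewrite -!(compA' (f := tTens _ _) (g := tTens _ _) (h := tTens _ _)) //.
by rewrite BRp.
Qed.
End Alg.


Section Pres.
Variable K : comPzRingType.
Local Notation term := (term K).

Lemma wt_heq k (t u : term) : heq k t u -> wt k t -> wt k u.
Proof. by move=> H; rewrite /wt (heq_ty H). Qed.

Lemma om_tsum a b (fs : seq term) : om (tsum a b fs) = tsum (swapo b) (swapo a) (map om fs).
Proof. by elim: fs => //= f fs ->. Qed.

Lemma om_delta r s : om (@delta K r s) = delta s r.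
Proof. by rewrite /delta eq_sym; case: (s == r). Qed.

Lemma tsum_heq k a b (F G : nat -> term) s : (forall r, r \in s -> heq k (F r) (G r)) ->
  heq k (tsum a b (map F s)) (tsum a b (map G s)).
Proof.
elim: s => //= r s IH H; apply: heq_add; first by apply: H; rewrite inE eqxx.
by apply: IH => x xs; apply: H; rewrite inE xs orbT.
Qed.

Lemma om_comp (g f : term) : om (tComp g f) = tComp (om f) (om g). Proof. by []. Qed.
Lemma om_add (g f : term) : om (tAdd g f) = tAdd (om g) (om f). Proof. by []. Qed.

Lemma om_invT : om (tInvT : term) = tOpp tInvT. Proof. by []. Qed.

Lemma om_dr k r : heq k (om (@dr K r)) (cr r).
Proof. exact: om_xcup. Qed.
Lemma om_cr k r : heq k (om (@cr K r)) (dr r).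
Proof. exact: om_xcap. Qed.

Lemma om_heq k (t u : term) : heq k t u -> wt k t -> heq (- k) (om t) (om u).
Proof.
elim=> {t u}.
- by [].
- move=> t u H IH Hu; symmetry; apply: IH; exact: (wt_heq (heq_sym H) Hu).
- move=> t u v H1 IH1 H2 IH2 Hw; rewrite (IH1 Hw); exact: (IH2 (wt_heq H1 Hw)).
- move=> g g' f f' _ IH1 _ IH2 /wt_compI[Hg Hf] /=; by rewrite (IH1 Hg) (IH2 Hf).
- move=> f f' g g' _ IH1 _ IH2 /wt_tensI[Hf Hg] /=; by rewrite (IH1 Hf) (IH2 Hg).
- move=> f f' g g' _ IH1 _ IH2 /wt_addI[Hf Hg] /=; by rewrite (IH1 Hf) (IH2 Hg).
- move=> c f f' _ IH Hw /=; by rewrite (IH Hw).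
- move=> h g f Hw _ /=; symmetry; apply: heq_compA; exact: (om_wt (wt_heq (heq_compA Hw) Hw)).
- move=> f a b Hf _ /=; exact: heq_id_r (om_ty Hf).
- move=> f a b Hf _ /=; exact: heq_id_l (om_ty Hf).
- move=> f g h Hw _ /=; exact: heq_addA (om_wt Hw).
- move=> f g Hw _ /=; exact: heq_addC (om_wt Hw).
- move=> f a b Hf _ /=; exact: heq_add0 (om_ty Hf).
- move=> f a b Hf _ /=; exact: heq_addN (om_ty Hf).
- move=> c d f Hw _ /=; exact: heq_scalA (om_wt Hw).
- move=> f Hw _ /=; exact: heq_scal1 (om_wt Hw).
- move=> c d f Hw _ /=; exact: heq_scalDl (om_wt Hw).
- move=> c f g Hw _ /=; exact: heq_scalDr (om_wt Hw).
- move=> h f g Hw _ /=; exact: heq_compDr (om_wt Hw).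
- move=> h f g Hw _ /=; exact: heq_compDl (om_wt Hw).
- move=> c g f Hw _ /=; exact: heq_compZr (om_wt Hw).
- move=> c g f Hw _ /=; exact: heq_compZl (om_wt Hw).
- move=> h f g Hw _ /=; exact: heq_tensDl (om_wt Hw).
- move=> h f g Hw _ /=; exact: heq_tensDr (om_wt Hw).
- move=> c g f Hw _ /=; exact: heq_tensZl (om_wt Hw).
- move=> c g f Hw _ /=; exact: heq_tensZr (om_wt Hw).
- move=> f g h Hw _ /=; exact: heq_tensA (om_wt Hw).
- move=> f Hw _ /=; exact: heq_tens1l (om_wt Hw).
- move=> f Hw _ /=; exact: heq_tens1r (om_wt Hw).
- move=> a b _ /=; rewrite swapo_cat; exact: heq_tensId.
- move=> f f' g g' Hw _ /=; exact: heq_interchange (om_wt Hw).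
- move=> _; exact: SSom.
- move=> _; exact: BRom.
- move=> _; exact: dAHAom.
- move=> _; exact: heq_adj2.
- move=> _; exact: heq_adj1.
- move=> Hk _.
  rewrite om_add om_comp om_tsum -map_comp om_invT D3 compNN //.
  have E : heq (- k) (tsum (swapo (up ++ dn)) (swapo (up ++ dn)) [seq (om \o (fun r => tComp (tInvC r) (dr r))) r | r <- iota 0 `|k|])
                     (tsum (dn ++ up) (dn ++ up) [seq tComp (cr r) (tInvE r) | r <- iota 0 `|k|] : term).
    by apply: tsum_heq => r _; apply: heq_comp; [exact: om_dr | done].
  rewrite E; move: Hk; rewrite le0r => /orP[/eqP k0|kpos].
    subst k; rewrite /= heq_add0 //; apply: heq_I2; by rewrite oppr0.
  rewrite -abszN; apply: heq_J1; by rewrite oppr_lt0.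
- move=> Hk _.
  rewrite om_comp om_invT D3 compNN //; move: Hk; rewrite le0r => /orP[/eqP k0|kpos].
    subst k; rewrite oppr0; have H := @heq_I1 K 0 (lexx _).
    exact: heq_trans (heq_sym (heq_add0 (f := tComp tInvT tT) (a := up ++ dn) (b := up ++ dn) (erefl _))) H.
  apply: heq_J2; by rewrite oppr_lt0.
- move=> r Hk Hr _.
  have /andP[Hk' Hr'] := invC_cond (introT andP (conj Hk Hr)).
  rewrite om_comp D3 /tOpp heq_compZr; last by rewrite /wt /= Hk' Hr'.
  rewrite heq_J4 //; exact: opp_zero.
- move=> r Hk Hr _.
  have /andP[Hk' Hr'] := invC_cond (introT andP (conj Hk Hr)).
  rewrite om_comp om_dr /tOpp heq_compZl; last by rewrite /wt /= ty_xpow.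
  rewrite heq_J3 //; exact: opp_zero.
- move=> r s Hk Hr Hs _.
  have /andP[Hk' Hr'] := invC_cond (introT andP (conj Hk Hr)).
  have /andP[_ Hs'] := invC_cond (introT andP (conj Hk Hs)).
  rewrite om_comp om_dr om_delta; exact: heq_J5.
- move=> Hk _.
  rewrite om_add om_comp om_tsum -map_comp om_invT D3 compNN //.
  have E : heq (- k) (tsum (swapo (dn ++ up)) (swapo (dn ++ up)) [seq (om \o (fun r => tComp (cr r) (tInvE r))) r | r <- iota 0 `|k|])
                     (tsum (up ++ dn) (up ++ dn) [seq tComp (tInvC r) (dr r) | r <- iota 0 `|k|] : term).
    by apply: tsum_heq => r _; apply: heq_comp; [done | exact: om_cr].
  rewrite E -abszN; apply: heq_I1; by rewrite oppr_ge0 ltW.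
- move=> Hk _.
  rewrite om_comp om_invT D3 compNN //; apply: heq_I2; by rewrite oppr_ge0 ltW.
- move=> r Hk Hr _.
  have /andP[Hk' Hr'] := invE_cond (introT andP (conj Hk Hr)).
  rewrite om_comp om_cr /tOpp heq_compZr; last by rewrite /wt /= ty_xpow.
  rewrite heq_I4 //; exact: opp_zero.
- move=> r Hk Hr _.
  have /andP[Hk' Hr'] := invE_cond (introT andP (conj Hk Hr)).
  rewrite om_comp D3 /tOpp heq_compZl; last by rewrite /wt /= Hk' Hr'.
  rewrite heq_I3 //; exact: opp_zero.
- move=> r s Hk Hr Hs _.
  have /andP[Hk' Hr'] := invE_cond (introT andP (conj Hk Hr)).
  have /andP[_ Hs'] := invE_cond (introT andP (conj Hk Hs)).
  rewrite om_comp om_cr om_delta; exact: heq_I5.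
Qed.

End Pres.


Lemma omom (K : comPzRingType) k (t : term K) : wt k t -> heq k (om (om t)) t.
Proof.
elim: t => //=.
- by move=> a _; rewrite swapoK.
- move=> _; exact: D4.
- move=> _; change (heq k (tScal (-1) (om (@tS' K))) tS); rewrite D5; exact: oppK.
- move=> _; exact: oppK.
- move=> g IHg f IHf /wt_compI[Hg Hf]; by rewrite (IHg Hg) (IHf Hf).
- move=> f IHf g IHg /wt_tensI[Hf Hg]; by rewrite (IHg Hg) (IHf Hf).
- by move=> a b _; rewrite !swapoK.
- move=> f IHf g IHg /wt_addI[Hf Hg]; by rewrite (IHg Hg) (IHf Hf).
- move=> c f IHf Hf; by rewrite (IHf Hf).
Qed.

Theorem lemma2p1 (K : comPzRingType) (k : int) :
  exists (omega : term K -> term K) (omega_inv : term K -> term K),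
    op_monoidal_functor k (- k)%R omega /\
        heq (- k)%R (omega tX) tX' /\
        heq (- k)%R (omega tS) (tOpp tS') /\
        heq (- k)%R (omega tC) tD /\
        heq (- k)%R (omega tD) tC /\
        (forall t a b, ty (- k)%R t = Some (a, b) -> ty k (omega_inv t) = Some (swapo b, swapo a)) /\
        (forall t u, wt (- k)%R t -> heq (- k)%R t u -> heq k (omega_inv t) (omega_inv u)) /\
        (forall t, wt k t -> heq k (omega_inv (omega t)) t) /\
        (forall u, wt (- k)%R u -> heq (- k)%R (omega (omega_inv u)) u).
Proof.
exists om, om.
split; first split.
  exact: om_ty.
split; first by move=> t u Hw H; exact: om_heq.
by do !split.
do 4 (split; first done).
split; first by move=> t a b H; have := om_ty H; rewrite opprK.
split; first by move=> t u Hw H; have := om_heq H Hw; rewrite opprK.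
split; first exact: omom.
exact: omom.
Qed.
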